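(* Let $P$ be a convex pentagon whose sides are parallel to the sides of $K$ (so all its interior angles equal $3\pi/5$), with heights $m_1,\dots,m_5$. If there are indices $i,j$ with $j\equiv i\pm1\pmod 5$ such that $m_i\ge m_l$ and $m_j\ge m_l$ for every $l\notin\{i,j\}$ (i.e. the two largest heights are adjacent), then $P$ is a regular pentagon.
   Context: $K\subset\mathbb R^2$ is the regular pentagon with circumradius $1$, centroid at the origin and $(0,1)$ a vertex; $v_1,\dots,v_5$ are the position vectors of its vertices in counterclockwise order. For a compact convex set $L$, its $i$th height is $m_i=\max_{x\in L}\langle x,v_i\rangle-\min_{x\in L}\langle x,v_i\rangle$. Indices are taken mod $5$. *)

(* Defs.v *)
From Stdlib Require Import Reals Lra Lia.
Open Scope R_scope.

Definition pt := (R * R)%type.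

Definition dot (x y : pt) : R := fst x * fst y + snd x * snd y.

(* Vertices of the reference regular pentagon K (circumradius 1, centroid 0),
   counterclockwise, indexed by k : nat (periodic mod 5), with v 0 = (0,1).
   (The paper's v_1..v_5 are our v 0 .. v 4.) *)
Definition v (k : nat) : pt :=
  (cos (PI/2 + 2*PI*INR k/5), sin (PI/2 + 2*PI*INR k/5)).

Definition hull5 (p : nat -> pt) (x : pt) : Prop :=
  exists l : nat -> R,
    (forall k, (k < 5)%nat -> 0 <= l k) /\
    sum_f_R0 l 4 = 1 /\
    fst x = sum_f_R0 (fun k => l k * fst (p k)) 4 /\
    snd x = sum_f_R0 (fun k => l k * snd (p k)) 4.

Definition is_height (L : pt -> Prop) (i : nat) (m : R) : Prop :=
  exists a b : R,
    (exists x, L x /\ dot x (v i) = a) /\ (forall x, L x -> dot x (v i) <= a) /\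
    (exists x, L x /\ dot x (v i) = b) /\ (forall x, L x -> b <= dot x (v i)) /\
    m = a - b.

Definition regular_pentagon (L : pt -> Prop) : Prop :=
  exists (c : pt) (r phi : R), 0 < r /\
    forall x, L x <-> hull5 (fun k => (fst c + r * cos (phi + 2*PI*INR k/5),
                                      snd c + r * sin (phi + 2*PI*INR k/5))) x.

Definition parallel_pentagon (p : nat -> pt) (t : nat -> R) : Prop :=
  (forall k, (k < 5)%nat -> 0 < t k) /\
  (forall k, (k < 5)%nat ->
     fst (p (S k mod 5)%nat) - fst (p k) = t k * (fst (v (S k)) - fst (v k)) /\
     snd (p (S k mod 5)%nat) - snd (p k) = t k * (snd (v (S k)) - snd (v k))).

(* Main.v *)
Require Import Defs.
From Stdlib Require Import Reals Lra Lia.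
Open Scope R_scope.

Definition cc1 := cos (2*PI/5).
Definition cc2 := cos (4*PI/5).
Definition cvf (n:nat) : R := match n with 0 => 1 | 1 => cc1 | 2 => cc2 | 3 => cc2 | _ => cc1 end.

Lemma Dgen j l : dot (v j) (v l) = cos (2*PI*(INR j - INR l)/5).
Proof.
  unfold dot, v; simpl. rewrite <- cos_minus. f_equal. field.
Qed.

Lemma cos2m z : cos (2*PI - z) = cos z.
Proof. rewrite cos_minus, cos_2PI, sin_2PI. ring. Qed.

Lemma dvv j l : (j <= 5)%nat -> (l <= 4)%nat -> dot (v j) (v l) = cvf ((j+5-l) mod 5).
Proof.
  intros Hj Hl. rewrite Dgen.
  destruct j as [|[|[|[|[|[|j]]]]]]; try lia;
  destruct l as [|[|[|[|[|l]]]]]; try lia;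
  cbn [cvf Nat.add Nat.sub Nat.modulo Nat.divmod snd]; unfold cc1, cc2;
  match goal with |- cos ?x = _ =>
   first [ (replace x with 0 by (simpl; lra); apply cos_0)
         | (replace x with (2*PI) by (simpl; lra); apply cos_2PI)
         | (replace x with (2*PI/5) by (simpl; lra); reflexivity)
         | (replace x with (4*PI/5) by (simpl; lra); reflexivity)
         | (replace x with (-(2*PI/5)) by (simpl; lra); apply cos_neg)
         | (replace x with (-(4*PI/5)) by (simpl; lra); apply cos_neg)
         | (replace x with (2*PI - 2*PI/5) by (simpl; lra); apply cos2m)
         | (replace x with (2*PI - 4*PI/5) by (simpl; lra); apply cos2m)
         | (replace x with (-(2*PI - 2*PI/5)) by (simpl; lra); rewrite cos_neg; apply cos2m)
         | (replace x with (-(2*PI - 4*PI/5)) by (simpl; lra); rewrite cos_neg; apply cos2m) ]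
  end.
Qed.

Lemma cc1_lt_1 : cc1 < 1.
Proof. unfold cc1. rewrite <- cos_0. pose proof PI_RGT_0. apply cos_decreasing_1; lra. Qed.
Lemma cc2_lt_cc1 : cc2 < cc1.
Proof. unfold cc1, cc2. pose proof PI_RGT_0. apply cos_decreasing_1; lra. Qed.

Lemma step p t u k : parallel_pentagon p t -> (k < 4)%nat ->
  dot (p (S k)) u = dot (p k) u + t k * (dot (v (S k)) u - dot (v k) u).
Proof.
  intros [_ H] Hk. destruct (H k ltac:(lia)) as [E1 E2].
  rewrite Nat.mod_small in E1, E2 by lia.
  unfold dot. assert (fst (p (S k)) = fst (p k) + t k * (fst (v (S k)) - fst (v k))) as -> by lra.
  assert (snd (p (S k)) = snd (p k) + t k * (snd (v (S k)) - snd (v k))) as -> by lra. ring.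
Qed.

Lemma step4 p t u : parallel_pentagon p t ->
  dot (p 0%nat) u = dot (p 4%nat) u + t 4%nat * (dot (v 5) u - dot (v 4) u).
Proof.
  intros [_ H]. destruct (H 4%nat ltac:(lia)) as [E1 E2]. change (S 4 mod 5)%nat with 0%nat in E1, E2.
  unfold dot. assert (fst (p 0%nat) = fst (p 4%nat) + t 4%nat * (fst (v 5) - fst (v 4))) as -> by lra.
  assert (snd (p 0%nat) = snd (p 4%nat) + t 4%nat * (snd (v 5) - snd (v 4))) as -> by lra. ring.
Qed.

Lemma vertex_in p k : (k < 5)%nat -> hull5 p (p k).
Proof.
  intros Hk. exists (fun j => if Nat.eqb j k then 1 else 0).
  destruct k as [|[|[|[|[|k]]]]]; try lia; simpl; repeat split; intros; try lra;
  try (match goal with |- context [if ?b then _ else _] => destruct b end; lra).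
Qed.

Lemma hull_le p x u M : hull5 p x -> (forall k, (k < 5)%nat -> dot (p k) u <= M) -> dot x u <= M.
Proof.
  intros [l [Hl [H1 [H2 H3]]]] Hv. unfold dot in *. rewrite H2, H3.
  assert (HM : M * sum_f_R0 l 4 = M) by (rewrite H1; ring). simpl in HM, H1 |- *.
  assert (forall k, (k<5)%nat -> 0 <= l k * (M - (fst (p k) * fst u + snd (p k) * snd u))).
  { intros k Hk. apply Rmult_le_pos. apply Hl; auto. specialize (Hv k Hk). lra. }
  pose proof (H 0%nat ltac:(lia)). pose proof (H 1%nat ltac:(lia)). pose proof (H 2%nat ltac:(lia)).
  pose proof (H 3%nat ltac:(lia)). pose proof (H 4%nat ltac:(lia)). lra.
Qed.

Lemma hull_ge p x u M : hull5 p x -> (forall k, (k < 5)%nat -> M <= dot (p k) u) -> M <= dot x u.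
Proof.
  intros [l [Hl [H1 [H2 H3]]]] Hv. unfold dot in *. rewrite H2, H3.
  assert (HM : M * sum_f_R0 l 4 = M) by (rewrite H1; ring). simpl in HM, H1 |- *.
  assert (forall k, (k<5)%nat -> 0 <= l k * ((fst (p k) * fst u + snd (p k) * snd u) - M)).
  { intros k Hk. apply Rmult_le_pos. apply Hl; auto. specialize (Hv k Hk). lra. }
  pose proof (H 0%nat ltac:(lia)). pose proof (H 1%nat ltac:(lia)). pose proof (H 2%nat ltac:(lia)).
  pose proof (H 3%nat ltac:(lia)). pose proof (H 4%nat ltac:(lia)). lra.
Qed.

Ltac prep p t L :=
  let H := fresh "H" in
  match goal with Hp : parallel_pentagon p t |- _ => rename Hp into H end;
  pose proof (step p t (v L) 0 H ltac:(lia)) as e0;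
  pose proof (step p t (v L) 1 H ltac:(lia)) as e1;
  pose proof (step p t (v L) 2 H ltac:(lia)) as e2;
  pose proof (step p t (v L) 3 H ltac:(lia)) as e3;
  pose proof (step4 p t (v L) H) as e4;
  rewrite !dvv in e0, e1, e2, e3, e4 by lia;
  cbn [cvf Nat.add Nat.sub Nat.modulo Nat.divmod snd] in e0, e1, e2, e3, e4;
  pose proof cc1_lt_1; pose proof cc2_lt_cc1;
  let tp := fresh "tp" in
  destruct H as [tp _];
  pose proof (tp 0%nat ltac:(lia)); pose proof (tp 1%nat ltac:(lia));
  pose proof (tp 2%nat ltac:(lia)); pose proof (tp 3%nat ltac:(lia));
  pose proof (tp 4%nat ltac:(lia));
  assert (0 < t 0%nat * (1 - cc1)) by (apply Rmult_lt_0_compat; lra);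
  assert (0 < t 1%nat * (1 - cc1)) by (apply Rmult_lt_0_compat; lra);
  assert (0 < t 2%nat * (1 - cc1)) by (apply Rmult_lt_0_compat; lra);
  assert (0 < t 3%nat * (1 - cc1)) by (apply Rmult_lt_0_compat; lra);
  assert (0 < t 4%nat * (1 - cc1)) by (apply Rmult_lt_0_compat; lra);
  assert (0 < t 0%nat * (cc1 - cc2)) by (apply Rmult_lt_0_compat; lra);
  assert (0 < t 1%nat * (cc1 - cc2)) by (apply Rmult_lt_0_compat; lra);
  assert (0 < t 2%nat * (cc1 - cc2)) by (apply Rmult_lt_0_compat; lra);
  assert (0 < t 3%nat * (cc1 - cc2)) by (apply Rmult_lt_0_compat; lra);
  assert (0 < t 4%nat * (cc1 - cc2)) by (apply Rmult_lt_0_compat; lra).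

Ltac dir_tac p t L L2 :=
  intros ? Hh; prep p t L;
  destruct Hh as [A [B [[xa [hxa ea]] [hA [[xb [hxb eb]] [hB em]]]]]];
  assert (A <= dot (p L) (v L)) by
    (rewrite <- ea; apply (hull_le p); auto; intros k hk;
     destruct k as [|[|[|[|[|k]]]]]; try lia; lra);
  assert (dot (p L) (v L) <= A) by (apply hA, vertex_in; lia);
  assert (dot (p L2) (v L) <= B) by
    (rewrite <- eb; apply (hull_ge p); auto; intros k hk;
     destruct k as [|[|[|[|[|k]]]]]; try lia; lra);
  assert (B <= dot (p L2) (v L)) by (apply hB, vertex_in; lia);
  lra.

Lemma dir0 p t mm : parallel_pentagon p t -> is_height (hull5 p) 0 mm ->
  mm = (1 - cc1) * t 0%nat + (cc1 - cc2) * t 1%nat.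
Proof. dir_tac p t 0%nat 2%nat. Qed.
Lemma dir1 p t mm : parallel_pentagon p t -> is_height (hull5 p) 1 mm ->
  mm = (1 - cc1) * t 1%nat + (cc1 - cc2) * t 2%nat.
Proof. dir_tac p t 1%nat 3%nat. Qed.
Lemma dir2 p t mm : parallel_pentagon p t -> is_height (hull5 p) 2 mm ->
  mm = (1 - cc1) * t 2%nat + (cc1 - cc2) * t 3%nat.
Proof. dir_tac p t 2%nat 4%nat. Qed.
Lemma dir3 p t mm : parallel_pentagon p t -> is_height (hull5 p) 3 mm ->
  mm = (1 - cc1) * t 3%nat + (cc1 - cc2) * t 4%nat.
Proof. dir_tac p t 3%nat 0%nat. Qed.
Lemma dir4 p t mm : parallel_pentagon p t -> is_height (hull5 p) 4 mm ->
  mm = (1 - cc1) * t 4%nat + (cc1 - cc2) * t 0%nat.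
Proof. dir_tac p t 4%nat 1%nat. Qed.

Ltac clo_tac p t L := intros; prep p t L; lra.
Lemma clo0 p t : parallel_pentagon p t ->
  (1 - cc1) * (t 4%nat - t 0%nat) + (cc1 - cc2) * (t 3%nat - t 1%nat) = 0.
Proof. clo_tac p t 0%nat. Qed.
Lemma clo1 p t : parallel_pentagon p t ->
  (1 - cc1) * (t 0%nat - t 1%nat) + (cc1 - cc2) * (t 4%nat - t 2%nat) = 0.
Proof. clo_tac p t 1%nat. Qed.
Lemma clo2 p t : parallel_pentagon p t ->
  (1 - cc1) * (t 1%nat - t 2%nat) + (cc1 - cc2) * (t 0%nat - t 3%nat) = 0.
Proof. clo_tac p t 2%nat. Qed.
Lemma clo3 p t : parallel_pentagon p t ->
  (1 - cc1) * (t 2%nat - t 3%nat) + (cc1 - cc2) * (t 1%nat - t 4%nat) = 0.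
Proof. clo_tac p t 3%nat. Qed.
Lemma clo4 p t : parallel_pentagon p t ->
  (1 - cc1) * (t 3%nat - t 4%nat) + (cc1 - cc2) * (t 2%nat - t 0%nat) = 0.
Proof. clo_tac p t 4%nat. Qed.

Lemma two_pos a b x y : 0 < a -> 0 < b -> 0 <= x -> 0 <= y -> a * x + b * y = 0 -> x = 0 /\ y = 0.
Proof. intros. split; nra. Qed.

Lemma comb (a b X Y Z : R) : X = 0 -> Y = 0 -> Z = a*X + b*Y -> Z = 0.
Proof. intros -> -> ->. ring. Qed.

Lemma alg (a b : R) (t m : nat -> R) : 0 < a -> 0 < b ->
  a * (t 4%nat - t 0%nat) + b * (t 3%nat - t 1%nat) = 0 ->
  a * (t 0%nat - t 1%nat) + b * (t 4%nat - t 2%nat) = 0 ->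
  a * (t 1%nat - t 2%nat) + b * (t 0%nat - t 3%nat) = 0 ->
  a * (t 2%nat - t 3%nat) + b * (t 1%nat - t 4%nat) = 0 ->
  a * (t 3%nat - t 4%nat) + b * (t 2%nat - t 0%nat) = 0 ->
  m 0%nat = a * t 0%nat + b * t 1%nat ->
  m 1%nat = a * t 1%nat + b * t 2%nat ->
  m 2%nat = a * t 2%nat + b * t 3%nat ->
  m 3%nat = a * t 3%nat + b * t 4%nat ->
  m 4%nat = a * t 4%nat + b * t 0%nat ->
  forall i, (i < 5)%nat ->
  (forall l : nat, (l < 5)%nat -> l <> i -> l <> (S i mod 5)%nat -> m l <= m i /\ m l <= m (S i mod 5)%nat) ->
  t 1%nat = t 0%nat /\ t 2%nat = t 0%nat /\ t 3%nat = t 0%nat /\ t 4%nat = t 0%nat.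
Proof.
  intros ha hb E0 E1 E2 E3 E4 M0 M1 M2 M3 M4 i hi Hmax.
  assert (EM0 : a * (m 4%nat - m 0%nat) + b * (m 3%nat - m 1%nat) = 0)
    by (apply (comb a b _ _ _ E0 E1); rewrite M0, M1, M3, M4; ring).
  assert (EM1 : a * (m 0%nat - m 1%nat) + b * (m 4%nat - m 2%nat) = 0)
    by (apply (comb a b _ _ _ E1 E2); rewrite M0, M1, M2, M4; ring).
  assert (EM2 : a * (m 1%nat - m 2%nat) + b * (m 0%nat - m 3%nat) = 0)
    by (apply (comb a b _ _ _ E2 E3); rewrite M0, M1, M2, M3; ring).
  assert (EM3 : a * (m 2%nat - m 3%nat) + b * (m 1%nat - m 4%nat) = 0)
    by (apply (comb a b _ _ _ E3 E4); rewrite M1, M2, M3, M4; ring).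
  assert (EM4 : a * (m 3%nat - m 4%nat) + b * (m 2%nat - m 0%nat) = 0)
    by (apply (comb a b _ _ _ E4 E0); rewrite M0, M2, M3, M4; ring).
  assert (Meq : m 1%nat = m 0%nat /\ m 2%nat = m 0%nat /\ m 3%nat = m 0%nat /\ m 4%nat = m 0%nat).
  { destruct i as [|[|[|[|[|i]]]]]; try lia; simpl in Hmax;
    try pose proof (Hmax 0%nat ltac:(lia) ltac:(lia) ltac:(lia));
    try pose proof (Hmax 1%nat ltac:(lia) ltac:(lia) ltac:(lia));
    try pose proof (Hmax 2%nat ltac:(lia) ltac:(lia) ltac:(lia));
    try pose proof (Hmax 3%nat ltac:(lia) ltac:(lia) ltac:(lia));
    try pose proof (Hmax 4%nat ltac:(lia) ltac:(lia) ltac:(lia)).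
    all: repeat match goal with h : _ /\ _ |- _ => destruct h end.
    - destruct (two_pos a b (m 0%nat - m 4%nat) (m 1%nat - m 3%nat)); try lra.
      destruct (two_pos a b (m 1%nat - m 2%nat) (m 0%nat - m 3%nat)); try lra; repeat split; lra.
    - destruct (two_pos a b (m 1%nat - m 0%nat) (m 2%nat - m 4%nat)); try lra.
      destruct (two_pos a b (m 2%nat - m 3%nat) (m 1%nat - m 4%nat)); try lra; repeat split; lra.
    - destruct (two_pos a b (m 2%nat - m 1%nat) (m 3%nat - m 0%nat)); try lra.
      destruct (two_pos a b (m 3%nat - m 4%nat) (m 2%nat - m 0%nat)); try lra; repeat split; lra.
    - destruct (two_pos a b (m 3%nat - m 2%nat) (m 4%nat - m 1%nat)); try lra.
      destruct (two_pos a b (m 4%nat - m 0%nat) (m 3%nat - m 1%nat)); try lra; repeat split; lra.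
    - destruct (two_pos a b (m 4%nat - m 3%nat) (m 0%nat - m 2%nat)); try lra.
      destruct (two_pos a b (m 0%nat - m 1%nat) (m 4%nat - m 2%nat)); try lra; repeat split; lra.
  }
  destruct Meq as [Q1 [Q2 [Q3 Q4]]].
  set (u0 := t 0%nat - t 1%nat). set (u1 := t 1%nat - t 2%nat). set (u2 := t 2%nat - t 3%nat).
  set (u3 := t 3%nat - t 4%nat). set (u4 := t 4%nat - t 0%nat).
  assert (F0 : a * u0 + b * u1 = 0) by (unfold u0, u1; lra).
  assert (F1 : a * u1 + b * u2 = 0) by (unfold u1, u2; lra).
  assert (F2 : a * u2 + b * u3 = 0) by (unfold u2, u3; lra).
  assert (F3 : a * u3 + b * u4 = 0) by (unfold u3, u4; lra).
  assert (F4 : a * u4 + b * u0 = 0) by (unfold u4, u0; lra).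
  assert (G1 : b * u1 = - a * u0) by lra.
  assert (G2 : b^2 * u2 = a^2 * u0).
  { replace (b^2*u2) with (b*(a*u1+b*u2) - a*(b*u1)) by ring. rewrite F1, G1. ring. }
  assert (G3 : b^3 * u3 = - a^3 * u0).
  { replace (b^3*u3) with (b^2*(a*u2+b*u3) - a*(b^2*u2)) by ring. rewrite F2, G2. ring. }
  assert (G4 : b^4 * u4 = a^4 * u0).
  { replace (b^4*u4) with (b^3*(a*u3+b*u4) - a*(b^3*u3)) by ring. rewrite F3, G3. ring. }
  assert (G5 : b^5 * u0 = - a^5 * u0).
  { replace (b^5*u0) with (b^4*(a*u4+b*u0) - a*(b^4*u4)) by ring. rewrite F4, G4. ring. }
  assert (Z0 : u0 = 0).
  { assert ((a^5 + b^5) * u0 = 0) by lra.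
    assert (0 < a^5 + b^5) by (pose proof (pow_lt a 5 ha); pose proof (pow_lt b 5 hb); lra).
    destruct (Rmult_integral _ _ H); lra. }
  assert (Z1 : u1 = 0).
  { rewrite Z0 in F0. assert (b * u1 = 0) by lra. destruct (Rmult_integral _ _ H); lra. }
  assert (Z2 : u2 = 0).
  { rewrite Z1 in F1. assert (b * u2 = 0) by lra. destruct (Rmult_integral _ _ H); lra. }
  assert (Z3 : u3 = 0).
  { rewrite Z2 in F2. assert (b * u3 = 0) by lra. destruct (Rmult_integral _ _ H); lra. }
  unfold u0, u1, u2, u3 in *. repeat split; lra.
Qed.

Lemma hull5_ext p q x : (forall k, (k < 5)%nat -> p k = q k) -> (hull5 p x <-> hull5 q x).
Proof.
  intros Hpq. unfold hull5.
  assert (S1 : forall l, sum_f_R0 (fun k => l k * fst (p k)) 4 = sum_f_R0 (fun k => l k * fst (q k)) 4).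
  { intros l. apply sum_eq. intros k hk. rewrite Hpq by lia. reflexivity. }
  assert (S2 : forall l, sum_f_R0 (fun k => l k * snd (p k)) 4 = sum_f_R0 (fun k => l k * snd (q k)) 4).
  { intros l. apply sum_eq. intros k hk. rewrite Hpq by lia. reflexivity. }
  split; intros [l Hl]; exists l; rewrite ?S1, ?S2 in *; auto.
Qed.

Theorem lemma9 (p : nat -> pt) (t : nat -> R) (m : nat -> R) :
  parallel_pentagon p t ->
  (forall i, (i < 5)%nat -> is_height (hull5 p) i (m i)) ->
  forall i j : nat, (i < 5)%nat -> (j < 5)%nat ->
    (j = (S i mod 5)%nat \/ i = (S j mod 5)%nat) ->
    (forall l : nat, (l < 5)%nat -> l <> i -> l <> j -> m l <= m i /\ m l <= m j) ->
    regular_pentagon (hull5 p).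
Proof.
  intros H Hh i j hi hj adj Hmax.
  pose proof (dir0 p t (m 0%nat) H (Hh 0%nat ltac:(lia))) as M0.
  pose proof (dir1 p t (m 1%nat) H (Hh 1%nat ltac:(lia))) as M1.
  pose proof (dir2 p t (m 2%nat) H (Hh 2%nat ltac:(lia))) as M2.
  pose proof (dir3 p t (m 3%nat) H (Hh 3%nat ltac:(lia))) as M3.
  pose proof (dir4 p t (m 4%nat) H (Hh 4%nat ltac:(lia))) as M4.
  pose proof (clo0 p t H). pose proof (clo1 p t H). pose proof (clo2 p t H).
  pose proof (clo3 p t H). pose proof (clo4 p t H).
  pose proof cc1_lt_1. pose proof cc2_lt_cc1.
  assert (T : t 1%nat = t 0%nat /\ t 2%nat = t 0%nat /\ t 3%nat = t 0%nat /\ t 4%nat = t 0%nat).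
  { destruct adj as [-> | ->].
    - apply (alg (1 - cc1) (cc1 - cc2) t m) with (i := i); try lra; auto.
    - apply (alg (1 - cc1) (cc1 - cc2) t m) with (i := j); try lra; auto.
      intros l hl h1 h2. destruct (Hmax l hl h2 h1); split; auto. }
  destruct T as [T1 [T2 [T3 T4]]].
  destruct H as [tp Hs].
  pose proof (tp 0%nat ltac:(lia)) as t0p.
  exists (fst (p 0%nat) - t 0%nat * fst (v 0), snd (p 0%nat) - t 0%nat * snd (v 0)), (t 0%nat), (PI/2).
  split; [lra|]. intros x. apply hull5_ext. intros k hk. cbv beta.
  change (cos (PI / 2 + 2 * PI * INR k / 5)) with (fst (v k)).
  change (sin (PI / 2 + 2 * PI * INR k / 5)) with (snd (v k)).
  destruct (Hs 0%nat ltac:(lia)) as [A0 B0]. destruct (Hs 1%nat ltac:(lia)) as [A1 B1].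
  destruct (Hs 2%nat ltac:(lia)) as [A2 B2]. destruct (Hs 3%nat ltac:(lia)) as [A3 B3].
  change (S 0 mod 5)%nat with 1%nat in A0, B0.
  change (S 1 mod 5)%nat with 2%nat in A1, B1.
  change (S 2 mod 5)%nat with 3%nat in A2, B2.
  change (S 3 mod 5)%nat with 4%nat in A3, B3.
  rewrite T1 in A1, B1. rewrite T2 in A2, B2. rewrite T3 in A3, B3.
  rewrite (surjective_pairing (p k)). cbn [fst snd].
  destruct k as [|[|[|[|[|k]]]]]; try lia; f_equal.
  all: lra.
Qed.
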